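(* Consider the algorithm described in the context, and suppose it does not terminate finitely. Then for all $k\in\mathbb{N}$, $$g_k^Ts_k+\frac{\bar\sigma_u\|s_k\|_2^2}{\alpha_k}+r(x_k+s_k)-r_k\le(\kappa_{\nabla f}+\kappa_{\partial r})\|v_k\|_2+\frac{\bar\sigma_u\|v_k\|_2^2}{\alpha_k}.$$
   Context: Problem: $\min_{x\in\mathbb{R}^n} f(x)+r(x)$ subject to $c(x)=0$, where $f:\mathbb{R}^n\to\mathbb{R}$ and $c:\mathbb{R}^n\to\mathbb{R}^m$ ($m\le n$) are continuously differentiable and $r:\mathbb{R}^n\to\mathbb{R}_{\ge 0}$ is convex. Write $g(x)=\nabla f(x)$, $J(x)=\nabla c(x)^T$, and $f_k=f(x_k)$, $g_k=g(x_k)$, $c_k=c(x_k)$, $J_k=J(x_k)$, $r_k=r(x_k)$. All norms are Euclidean. Merit function: $\Phi_\tau(x)=\tau(f(x)+r(x))+\|c(x)\|_2$. Algorithm: inputs $x_0$, $\alpha_0>0$, $\tau_{-1}>0$; constants $\kappa_v>0$, $\sigma_c,\epsilon_\tau,\xi,\eta\in(0,1)$, $\sigma_u\in(0,1/2]$, $\bar\sigma_u:=\sigma_u+\tfrac12$. For $k=0,1,\dots$: 1. If $J_k^Tc_k\ne0$, compute $v_k$ with $v_k\in\mathrm{Range}(J_k^T)$, $\|v_k\|_2\le\kappa_v\alpha_k\|J_k^Tc_k\|_2$, $\|c_k+J_kv_k\|_2\le\|c_k+J_kv_k^c\|_2$, where $v_k^c=-\beta_k^cJ_k^Tc_k$ with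 $\beta_k^c$ minimizing $\tfrac12\|c_k-\beta J_kJ_k^Tc_k\|_2^2$ over $0\le\beta\le\kappa_v\alpha_k$. Otherwise set $v_k=0$, and if $c_k\ne0$ terminate. 2. Let $u_k$ be the unique minimizer of $g_k^Tu+\tfrac1{2\alpha_k}\|u\|_2^2+r(x_k+v_k+u)$ subject to $J_ku=0$; set $s_k=v_k+u_k$. If $s_k=0$, terminate. 3. Let $D_k:=g_k^Ts_k+\bar\sigma_u\|s_k\|_2^2/\alpha_k+r(x_k+s_k)-r_k$; $\tau_{k,\mathrm{trial}}=\infty$ if $D_k\le0$, else $\tau_{k,\mathrm{trial}}=(1-\sigma_c)(\|c_k\|_2-\|c_k+J_kv_k\|_2)/D_k$. Set $\tau_k=\tau_{k-1}$ if $\tau_{k-1}\le\tau_{k,\mathrm{trial}}$, else $\tau_k=\min\{(1-\epsilon_\tau)\tau_{k-1},\tau_{k,\mathrm{trial}}\}$. 4. With $\Delta q_k(s,\tau):=-\tau(g_k^Ts+\tfrac1{2\alpha_k}\|s\|_2^2+r(x_k+s)-r_k)+\|c_k\|_2-\|c_k+J_ks\|_2$: if $\Phi_{\tau_k}(x_k+s_k)\le\Phi_{\tau_k}(x_k)-\eta\Delta q_k(s_k,\tau_k)$ set $x_{k+1}=x_k+s_k$, $\alpha_{k+1}=\alpha_k$; else $x_{k+1}=x_k$, $\alpha_{k+1}=\xi\alpha_k$. Standing assumption: there is an open convex set $\mathcal X$ containing all iterates $x_k$ and trial points $x_k+s_k$ such that $f$ is bounded below on $\mathcal X$, $\|\nabla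 f(x)\|_2\le\kappa_{\nabla f}$ for $x\in\mathcal X$ and $\nabla f$ is Lipschitz on $\mathcal X$, $c$ and $J$ are bounded on $\mathcal X$ and $J$ is Lipschitz on $\mathcal X$, and every subgradient $w\in\partial r(x)$ with $x\in\mathcal X$ satisfies $\|w\|_2\le\kappa_{\partial r}$ (constants $\kappa_{\nabla f},\kappa_{\partial r}>0$). *)

(* Defs.v *)
From HB Require Import structures.
From mathcomp Require Import all_boot all_order all_algebra.
From mathcomp Require Import reals.
Set Implicit Arguments. Unset Strict Implicit. Unset Printing Implicit Defensive.
Import Order.TTheory GRing.Theory Num.Theory.
Local Open Scope ring_scope.

Section Defs.
Variable R : realType.

Definition dotv {n : nat} (u v : 'cV[R]_n) : R := \sum_(i < n) u i 0 * v i 0.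
Definition norm2 {n : nat} (v : 'cV[R]_n) : R := Num.sqrt (dotv v v).
Definition frob {m n : nat} (A : 'M[R]_(m, n)) : R :=
  Num.sqrt (\sum_(i < m) \sum_(j < n) A i j ^+ 2).

Definition has_gradient {n : nat} (f : 'cV[R]_n -> R) (g : 'cV[R]_n -> 'cV[R]_n) :=
  forall x, forall eps, 0 < eps -> exists2 delta, 0 < delta &
    forall y, norm2 (y - x) < delta ->
      `|f y - f x - dotv (g x) (y - x)| <= eps * norm2 (y - x).

Definition has_jacobian {n m : nat} (c : 'cV[R]_n -> 'cV[R]_m)
    (J : 'cV[R]_n -> 'M[R]_(m, n)) :=
  forall x, forall eps, 0 < eps -> exists2 delta, 0 < delta &
    forall y, norm2 (y - x) < delta ->
      norm2 (c y - c x - J x *m (y - x)) <= eps * norm2 (y - x).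

Definition continuous_vec {n p : nat} (h : 'cV[R]_n -> 'cV[R]_p) :=
  forall x, forall eps, 0 < eps -> exists2 delta, 0 < delta &
    forall y, norm2 (y - x) < delta -> norm2 (h y - h x) < eps.

Definition continuous_mat {n m p : nat} (h : 'cV[R]_n -> 'M[R]_(m, p)) :=
  forall x, forall eps, 0 < eps -> exists2 delta, 0 < delta &
    forall y, norm2 (y - x) < delta -> frob (h y - h x) < eps.

Definition convex_fun {n : nat} (r : 'cV[R]_n -> R) :=
  forall x y (t : R), 0 <= t -> t <= 1 ->
    r ((1 - t) *: x + t *: y) <= (1 - t) * r x + t * r y.

Definition subgrad {n : nat} (r : 'cV[R]_n -> R) (x w : 'cV[R]_n) :=
  forall y, r x + dotv w (y - x) <= r y.

Definition open_set {n : nat} (X : 'cV[R]_n -> Prop) :=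
  forall x, X x -> exists2 e, 0 < e & forall y, norm2 (y - x) < e -> X y.

Definition convex_set {n : nat} (X : 'cV[R]_n -> Prop) :=
  forall x y (t : R), X x -> X y -> 0 <= t -> t <= 1 -> X ((1 - t) *: x + t *: y).

Definition merit {n m : nat} (f r : 'cV[R]_n -> R) (c : 'cV[R]_n -> 'cV[R]_m)
  (tau : R) (x : 'cV[R]_n) : R := tau * (f x + r x) + norm2 (c x).

Definition dq {n m : nat} (g : 'cV[R]_n -> 'cV[R]_n) (r : 'cV[R]_n -> R)
  (c : 'cV[R]_n -> 'cV[R]_m) (J : 'cV[R]_n -> 'M[R]_(m, n))
  (xk : 'cV[R]_n) (alpha : R) (s : 'cV[R]_n) (tau : R) : R :=
  - tau * (dotv (g xk) s + (2 * alpha)^-1 * norm2 s ^+ 2 + r (xk + s) - r xk)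
  + norm2 (c xk) - norm2 (c xk + J xk *m s).

Definition Dk {n : nat} (g : 'cV[R]_n -> 'cV[R]_n) (r : 'cV[R]_n -> R)
  (sbar : R) (xk : 'cV[R]_n) (alpha : R) (s : 'cV[R]_n) : R :=
  dotv (g xk) s + sbar * norm2 s ^+ 2 / alpha + r (xk + s) - r xk.

(* A non-terminating run of the algorithm: sequences x_k, alpha_k, tau_k
   (tau_{-1} = taum1), v_k, u_k satisfying Steps 1-4 for every k, with
   neither termination test firing. *)
Definition nonterminating_run {n m : nat}
  (f : 'cV[R]_n -> R) (g : 'cV[R]_n -> 'cV[R]_n) (r : 'cV[R]_n -> R)
  (c : 'cV[R]_n -> 'cV[R]_m) (J : 'cV[R]_n -> 'M[R]_(m, n))
  (kappa_v sigma_c eps_tau xi eta sigma_u taum1 : R)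
  (x : nat -> 'cV[R]_n) (alpha tau : nat -> R) (v u : nat -> 'cV[R]_n) : Prop :=
  let sbar := sigma_u + 2^-1 in
  forall k : nat,
    let xk := x k in let ak := alpha k in
    let gk := g xk in let ck := c xk in let Jk := J xk in
    let sk := v k + u k in
    (if (Jk^T *m ck != 0) then
       (exists y : 'cV[R]_m, v k = Jk^T *m y) /\
       norm2 (v k) <= kappa_v * ak * norm2 (Jk^T *m ck) /\
       (exists beta_c : R,
          [/\ 0 <= beta_c, beta_c <= kappa_v * ak,
              (forall beta : R, 0 <= beta -> beta <= kappa_v * ak ->
                 2^-1 * norm2 (ck - beta *: (Jk *m Jk^T *m ck)) ^+ 2
                 >= 2^-1 * norm2 (ck - beta_c *: (Jk *m Jk^T *m ck)) ^+ 2) &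
              norm2 (ck + Jk *m v k)
                <= norm2 (ck + Jk *m (- beta_c *: (Jk^T *m ck)))])
     else v k = 0 /\ ck = 0 (* ck <> 0 would terminate *)) /\
    (Jk *m u k = 0 /\
     forall w : 'cV[R]_n, Jk *m w = 0 ->
       dotv gk (u k) + (2 * ak)^-1 * norm2 (u k) ^+ 2 + r (xk + v k + u k)
       <= dotv gk w + (2 * ak)^-1 * norm2 w ^+ 2 + r (xk + v k + w)) /\
    sk <> 0 (* s_k = 0 would terminate *) /\
    (let D := Dk g r sbar xk ak sk in
     let tprev := if k is k'.+1 then tau k' else taum1 in
     if D <= 0 then tau k = tprev
     else let trial := (1 - sigma_c) * (norm2 ck - norm2 (ck + Jk *m v k)) / D in
          tau k = (if tprev <= trial then tprev
                   else Num.min ((1 - eps_tau) * tprev) trial)) /\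
    (if merit f r c (tau k) (xk + sk)
        <= merit f r c (tau k) xk - eta * dq g r c J xk ak sk (tau k)
     then x k.+1 = xk + sk /\ alpha k.+1 = ak
     else x k.+1 = xk /\ alpha k.+1 = xi * ak).

End Defs.

(* Main.v *)
Require Import Defs.
From HB Require Import structures.
From mathcomp Require Import all_boot all_order all_algebra.
From mathcomp Require Import reals classical_sets boolp.
From mathcomp Require Import ring lra.
Import Order.TTheory GRing.Theory Num.Theory.
Local Open Scope ring_scope.

Section Aux.
Variable R : realType.
Variable n : nat.
Implicit Types a b d : 'cV[R]_n.

Lemma dotvDl a b d : dotv (a + b) d = dotv a d + dotv b d.
Proof. by rewrite /dotv -big_split; apply: eq_bigr => i _; rewrite !mxE mulrDl. Qed.
Lemma dotvDr a b d : dotv d (a + b) = dotv d a + dotv d b.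
Proof. by rewrite /dotv -big_split; apply: eq_bigr => i _; rewrite !mxE mulrDr. Qed.
Lemma dotvZl (k : R) a d : dotv (k *: a) d = k * dotv a d.
Proof. by rewrite /dotv mulr_sumr; apply: eq_bigr => i _; rewrite !mxE mulrA. Qed.
Lemma dotvZr (k : R) a d : dotv d (k *: a) = k * dotv d a.
Proof. by rewrite /dotv mulr_sumr; apply: eq_bigr => i _; rewrite !mxE mulrCA. Qed.
Lemma dotvC a b : dotv a b = dotv b a.
Proof. by rewrite /dotv; apply: eq_bigr => i _; rewrite mulrC. Qed.
Lemma dotvNl a d : dotv (- a) d = - dotv a d.
Proof. by rewrite -scaleN1r dotvZl mulN1r. Qed.
Lemma dotvNr a d : dotv d (- a) = - dotv d a.
Proof. by rewrite -scaleN1r dotvZr mulN1r. Qed.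
Lemma dotvBl a b d : dotv (a - b) d = dotv a d - dotv b d.
Proof. by rewrite dotvDl dotvNl. Qed.
Lemma dotvBr a b d : dotv d (a - b) = dotv d a - dotv d b.
Proof. by rewrite dotvDr dotvNr. Qed.
Lemma dotv_ge0 a : 0 <= dotv a a.
Proof. by apply: sumr_ge0 => i _; rewrite -expr2 sqr_ge0. Qed.
Lemma norm2_sq a : norm2 a ^+ 2 = dotv a a.
Proof. by rewrite /norm2 sqr_sqrtr // dotv_ge0. Qed.
Lemma norm2_ge0 a : 0 <= norm2 a.
Proof. exact: sqrtr_ge0. Qed.
Lemma norm2Z (k : R) a : norm2 (k *: a) = `|k| * norm2 a.
Proof. by rewrite /norm2 dotvZl dotvZr mulrA -expr2 sqrtrM ?sqr_ge0 // sqrtr_sqr. Qed.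
Lemma dotv_delta a (i : 'I_n) : dotv a (delta_mx i 0) = a i 0.
Proof.
rewrite /dotv (bigD1 i) //= big1 ?addr0; first by rewrite mxE !eqxx mulr1.
by move=> j /negbTE ji; rewrite mxE ji mulr0.
Qed.

Lemma CS a b : dotv a b <= norm2 a * norm2 b.
Proof.
have q : forall l : R, 0 <= l ^+ 2 * dotv a a - 2 * l * dotv a b + dotv b b.
  move=> l; suff -> : l ^+ 2 * dotv a a - 2 * l * dotv a b + dotv b b = dotv (l *: a - b) (l *: a - b) by exact: dotv_ge0.
  rewrite !dotvBl !dotvBr !dotvZl !dotvZr (dotvC b a); ring.
have hA := dotv_ge0 a; have hB := dotv_ge0 b.
have sA := norm2_sq a; have sB := norm2_sq b.
have nA := norm2_ge0 a; have nB := norm2_ge0 b.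
set A := dotv a a in q hA sA *; set B := dotv b b in q hB sB *; set C := dotv a b in q *.
have [A0|Apos] := eqVneq A 0.
  have [Cpos|] := ltrP 0 C; last by move=> C0; apply: le_trans C0 _; exact: mulr_ge0.
  have := q ((B + 1) / C); rewrite A0 mulr0 add0r.
  have -> : 2 * ((B + 1) / C) * C = 2 * (B+1) by rewrite -mulrA divfK // gt_eqF.
  lra.
have Ap : 0 < A by rewrite lt_neqAle eq_sym Apos hA.
have hq := q (C / A).
have h1 : C ^+ 2 <= A * B.
  have e : (C / A) ^+ 2 * A - 2 * (C / A) * C + B = (A * B - C ^+ 2) / A.
    by field; rewrite gt_eqF.
  by move: hq; rewrite e pmulr_lge0 ?invr_gt0 // subr_ge0.
have [C0|Cpos] := lerP C 0; first by apply: le_trans C0 _; exact: mulr_ge0.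
rewrite -sA -sB -exprMn in h1.
have hP := mulr_ge0 nA nB.
by move: h1; rewrite ler_sqr // ?nnegrE // ltW.
Qed.

Lemma subgrad_ex (r : 'cV[R]_n -> R) : convex_fun r -> forall y, exists w, subgrad r y w.
Proof.
move=> cvx y.
suff H : forall k, (k <= n)%N -> exists w : 'cV[R]_n, forall z : 'cV[R]_n,
    (forall i : 'I_n, (k <= i)%N -> z i 0 = y i 0) -> r y + dotv w (z - y) <= r z.
  have [w Hw] := H n (leqnn n); exists w => z; apply: Hw => i.
  by rewrite leqNgt ltn_ord.
elim=> [_|k IH Hk].
  exists 0 => z Hz; have -> : z = y by apply/matrixP => i j; rewrite (ord1 j); apply: Hz.
  by rewrite subrr /dotv big1 ?addr0 // => i _; rewrite mxE mul0r.
have [w Hw] := IH (ltnW Hk).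
pose kk : 'I_n := Ordinal Hk.
pose e : 'cV[R]_n := delta_mx kk 0.
pose l := fun x => r y + dotv w (x - y).
pose A := fun x : 'cV[R]_n => forall i : 'I_n, (k <= i)%N -> x i 0 = y i 0.
have key : forall x x' s t, A x -> A x' -> 0 < s -> 0 < t ->
    (l x' - r (x' - s *: e)) / s <= (r (x + t *: e) - l x) / t.
  move=> x x' s t Ax Ax' s0 t0.
  pose p := s + t; have p0 : 0 < p by rewrite addr_gt0.
  pose mu := s / p.
  have e1 : 1 - mu = t / p by rewrite /mu /p; field; rewrite gt_eqF.
  have hm : (1 - mu) * s = mu * t by rewrite e1 /mu; field; rewrite gt_eqF.
  pose P := x' - s *: e; pose Q := x + t *: e.
  pose M := (1 - mu) *: P + mu *: Q.
  have AM : A M.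
    move=> i hi; rewrite /M /P /Q !mxE Ax // Ax' //.
    set d := (_ %:R).
    have -> : (1 - mu) * (y i 0 + - (s * d)) + mu * (y i 0 + t * d)
       = y i 0 + (mu * t - (1 - mu) * s) * d by ring.
    by rewrite hm subrr mul0r addr0.
  have mu0 : 0 <= mu by rewrite divr_ge0 // ltW.
  have mu1 : mu <= 1 by rewrite -subr_ge0 e1 divr_ge0 // ltW.
  have cv := cvx P Q mu mu0 mu1.
  have hl := Hw M AM.
  have hl2 := le_trans hl cv.
  rewrite /M !dotvBr !dotvDr !dotvZr /P /Q in hl2. rewrite !dotvBr in hl2. rewrite !dotvDr !dotvZr !dotv_delta e1 in hl2.
  rewrite /l !dotvBr.
  rewrite -/P -/Q.
  move: hl2; set a1 := dotv w x'; set a2 := dotv w x; set a0 := dotv w y; set wk := w kk 0.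
  set rP := r P; set rQ := r Q; set ry := r y => hl2.
  have hl3 := hl2; rewrite -(ler_pM2l p0) in hl3.
  have E1 : p * (ry + (t / p * (a1 - s * wk) + mu * (a2 + t * wk) - a0))
      = p * ry + t * a1 + s * a2 - p * a0 by rewrite /mu /p; field; rewrite gt_eqF.
  have E2 : p * (t / p * rP + mu * rQ) = t * rP + s * rQ by rewrite /mu /p; field; rewrite gt_eqF.
  rewrite E1 E2 /p in hl3.
  rewrite ler_pdivrMr // mulrAC ler_pdivlMr //.
  nra.
pose L : classical_sets.set R := fun q => exists (x : 'cV[R]_n) (s : R), A x /\ 0 < s /\ q = (l x - r (x - s *: e)) / s.
have L0 : classical_sets.nonempty L.
  by exists ((l y - r (y - 1 *: e)) / 1); exists y, 1; do ! split => //; rewrite ltr01.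
have hL : classical_sets.has_sup L.
  split => //; exists ((r (y + 1 *: e) - l y) / 1) => q [x [s [Ax [s0 ->]]]].
  by apply: key => //; rewrite ltr01.
pose a := sup L.
exists (w + (a - w kk 0) *: e) => z Az.
pose t := z kk 0 - y kk 0.
pose x := z - t *: e.
have Ax : A x.
  move=> i hi; rewrite /x !mxE.
  have [ik|ik] := eqVneq i kk.
    by rewrite ik !eqxx /= mulr1 /t opprB addrC subrK.
  rewrite /= mulr0 subr0; apply: Az.
  by rewrite ltn_neqAle hi andbT; apply: contra ik => /eqP ki; apply/eqP/val_inj => /=; rewrite ki.
have zx : z = x + t *: e by rewrite /x subrK.
have dot : dotv (w + (a - w kk 0) *: e) (z - y) = dotv w (x - y) + t * a.
  have -> : z - y = (x - y) + t *: e by rewrite zx addrAC.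
  rewrite dotvDl dotvZl [dotv w _]dotvDr dotvZr dotv_delta (dotvC e) dotv_delta.
  rewrite !mxE !eqxx /= mulr1 /x /t ?mxE ?eqxx /= ?mulr1; ring.
rewrite dot.
have [ht|ht|ht] := ltrgt0P t.
- have : a <= (r (x + t *: e) - l x) / t.
    apply: ge_sup => // q [x' [s [Ax' [s0 ->]]]]; exact: key.
  rewrite ler_pdivlMr // -zx /l; lra.
- have : (l x - r (x - (- t) *: e)) / (- t) <= a.
    apply: sup_upper_bound => //; exists x, (- t); split => //; split => //; by rewrite oppr_gt0.
  rewrite ler_pdivrMr ?oppr_gt0 // scaleNr opprK -zx /l; lra.
- have -> : z = x by rewrite zx ht scale0r addr0.
  rewrite ht mul0r addr0; exact: Hw.
Qed.

Lemma dotv_mx a b : dotv a b = (a^T *m b) 0 0.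
Proof. by rewrite mxE /dotv; apply: eq_bigr => i _; rewrite mxE. Qed.

End Aux.
Arguments norm2_ge0 {R n}.
Arguments CS {R n}.
Arguments dotvC {R n}.
Arguments subgrad_ex {R n r}.

Lemma lim_arg {R : realType} {A B C e : R} : 0 < e ->
  (forall t, 0 < t -> t <= e -> A - t * B <= C) -> A <= C.
Proof.
move=> e0 H; case: (lerP A C) => // hAC; exfalso.
pose d := A - C; have d0 : 0 < d by rewrite subr_gt0.
pose t := Num.min e (d / (`|B| + 1)).
have hB1 : 0 < `|B| + 1 by rewrite ltr_wpDl.
have t0 : 0 < t by rewrite lt_min e0 divr_gt0.
have te : t <= e by rewrite ge_min lexx.
have h := H t t0 te.
have h1 : t * B <= t * `|B| by apply: ler_wpM2l; [exact: ltW | exact: ler_norm].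
have h2 : t * `|B| <= d / (`|B| + 1) * `|B| by apply: ler_wpM2r => //; rewrite ge_min lexx orbT.
have h3 : d / (`|B| + 1) * `|B| < d.
  by rewrite mulrAC ltr_pdivrMr // mulrDr mulr1 ltrDl.
have h4 := le_lt_trans h1 (le_lt_trans h2 h3).
move: h h4; rewrite /d; set tB := t * B; lra.
Qed.
Theorem lemma3p7 (R : realType) (n m : nat) (Hmn : (m <= n)%N)
  (f : 'cV[R]_n -> R) (g : 'cV[R]_n -> 'cV[R]_n) (r : 'cV[R]_n -> R)
  (c : 'cV[R]_n -> 'cV[R]_m) (J : 'cV[R]_n -> 'M[R]_(m, n))
  (* problem data *)
  (Hg : has_gradient f g) (Hgc : continuous_vec g)
  (HJ : has_jacobian c J) (HJc : continuous_mat J)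
  (Hr0 : forall x, 0 <= r x) (Hrc : convex_fun r)
  (* algorithm constants and inputs *)
  (kappa_v sigma_c eps_tau xi eta sigma_u alpha0 taum1 : R)
  (Hkv : 0 < kappa_v)
  (Hsc : 0 < sigma_c < 1) (Het : 0 < eps_tau < 1) (Hxi : 0 < xi < 1)
  (Heta : 0 < eta < 1) (Hsu : 0 < sigma_u <= 2^-1)
  (Ha0 : 0 < alpha0) (Ht0 : 0 < taum1)
  (* iterates *)
  (x : nat -> 'cV[R]_n) (alpha tau : nat -> R) (v u : nat -> 'cV[R]_n)
  (Hal0 : alpha 0%N = alpha0)
  (Hrun : nonterminating_run f g r c J kappa_v sigma_c eps_tau xi eta sigma_u
            taum1 x alpha tau v u)
  (* standing assumption *)
  (X : 'cV[R]_n -> Prop) (kappa_gf kappa_dr : R)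
  (HXo : open_set X) (HXc : convex_set X)
  (HXx : forall k, X (x k)) (HXs : forall k, X (x k + (v k + u k)))
  (Hflow : exists lb, forall y, X y -> lb <= f y)
  (Hkgf : 0 < kappa_gf) (Hkdr : 0 < kappa_dr)
  (Hgb : forall y, X y -> norm2 (g y) <= kappa_gf)
  (HgL : exists L, forall y z, X y -> X z -> norm2 (g y - g z) <= L * norm2 (y - z))
  (Hcb : exists B, forall y, X y -> norm2 (c y) <= B)
  (HJb : exists B, forall y, X y -> frob (J y) <= B)
  (HJL : exists L, forall y z, X y -> X z -> frob (J y - J z) <= L * norm2 (y - z))
  (Hsub : forall y w, X y -> subgrad r y w -> norm2 w <= kappa_dr) :
  forall k : nat,
    Dk g r (sigma_u + 2^-1) (x k) (alpha k) (v k + u k)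
    <= (kappa_gf + kappa_dr) * norm2 (v k)
       + (sigma_u + 2^-1) * norm2 (v k) ^+ 2 / alpha k.
Proof.
have apos : forall j, 0 < alpha j.
  elim=> [|j IHj]; first by rewrite Hal0.
  have [_ [_ [_ [_ H4]]]] := Hrun j.
  move: H4; case: ifP => _ [_ ->] //.
  by case/andP: Hxi => xi0 _; exact: mulr_gt0.
move=> k.
have [H1 [[Ju Hmin] _]] := Hrun k.
set xk := x k in H1 Hmin *; set vk := v k in H1 Hmin *; set uk := u k in Ju H1 Hmin *.
set ak := alpha k in Hmin *.
have ak0 : 0 < ak := apos k.
have orth : dotv vk uk = 0.
  move: H1; case: ifP => _.
    move=> [[y ->] _]; rewrite dotv_mx trmx_mul trmxK -mulmxA Ju mulmx0 mxE //.
  by move=> [-> _]; rewrite /dotv big1 // => i _; rewrite mxE mul0r.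
have [e e0 He] := HXo _ (HXs k).
set nu := norm2 uk; set nv := norm2 vk.
set G := dotv (g xk) uk.
have nu0 : 0 <= nu := norm2_ge0 uk.
have nv0 : 0 <= nv := norm2_ge0 vk.
pose e' := Num.min (2^-1) (e / (nu + 1)).
have e'0 : 0 < e' by rewrite lt_min invr_gt0 ltr0n divr_gt0 // ltr_wpDl.
have key : forall t, 0 < t -> t <= e' ->
    (G + nu ^+ 2 / ak + r (xk + vk + uk) - r xk) - t * (nu ^+ 2 / (2 * ak)) <= kappa_dr * nv.
  move=> t t0 te.
  have t1 : t <= 2^-1 by move: te; rewrite le_min => /andP[].
  have t2 : t <= e / (nu + 1) by move: te; rewrite le_min => /andP[].
  have tu : t * nu < e.
    have hnu : 0 < nu + 1 by rewrite ltr_wpDl.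
    apply: (le_lt_trans (y := e / (nu + 1) * nu)); first by apply: ler_wpM2r.
    by rewrite mulrAC ltr_pdivrMr // mulrDr mulr1 ltrDl.
  have t1' : t <= 1 by apply: (le_trans t1); rewrite invf_le1 // ?ler1n ?ltr0n.
  have omt : 0 <= 1 - t by rewrite subr_ge0.
  pose pt := xk + vk + (1 - t) *: uk.
  have Xp : X pt.
    apply: He.
    have -> : pt - (xk + (vk + uk)) = (- t) *: uk by apply/matrixP => i j; rewrite !mxE; ring.
    by rewrite norm2Z normrN gtr0_norm.
  have [w Hw] := subgrad_ex Hrc pt.
  have wb := Hsub _ _ Xp Hw.
  pose zt := (1 - t) *: (xk + (vk + uk)) + t *: xk.
  have cv := Hrc (xk + (vk + uk)) xk t (ltW t0) t1'.
  rewrite -/zt addrA in cv.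
  have sg := Hw zt.
  have ez : zt - pt = (- t) *: vk by apply/matrixP => i j; rewrite !mxE; ring.
  rewrite ez dotvZr in sg.
  have cs := CS w vk.
  have cs2 : norm2 w * nv <= kappa_dr * nv by apply: ler_wpM2r.
  have tdw : t * dotv w vk <= t * (kappa_dr * nv).
    by apply: ler_wpM2l; [exact: ltW | exact: le_trans cs cs2].
  have Jw : J xk *m ((1 - t) *: uk) = 0 by rewrite -scalemxAr Ju scaler0.
  have hm := Hmin _ Jw.
  rewrite dotvZr norm2Z ger0_norm // in hm.
  rewrite -(ler_pM2l t0).
  move: hm sg cv tdw.
  set q := (2 * ak)^-1.
  have -> : nu ^+ 2 / ak = 2 * (q * nu ^+ 2) by rewrite /q; field; rewrite gt_eqF.
  have -> : nu ^+ 2 / (2 * ak) = q * nu ^+ 2 by rewrite /q mulrC.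
  rewrite -/pt.
  set Q := q * nu ^+ 2.
  have -> : q * ((1 - t) * nu) ^+ 2 = (1 - t) ^+ 2 * Q by rewrite /Q; ring.
  move=> hm sg cv tdw.
  rewrite -/G in hm; nra.
have lim := lim_arg (e := e') e'0 key.
rewrite /Dk.
rewrite dotvDr -/G norm2_sq dotvDl !dotvDr (dotvC uk vk) orth -!norm2_sq -/nu -/nv addrA.
have gv : dotv (g xk) vk <= kappa_gf * nv.
  apply: le_trans (CS (g xk) vk) _; apply: ler_wpM2r => //; exact: Hgb (HXx k).
set sb := sigma_u + 2^-1.
have sb0 : 0 <= sb by rewrite addr_ge0 // ?invr_ge0 ?ler0n // ltW //; case/andP: Hsu.
have sb1 : sb <= 1.
  case/andP: Hsu => _ h; rewrite /sb; lra.
have ua0 : 0 <= nu ^+ 2 / ak by rewrite divr_ge0 ?sqr_ge0 // ltW.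
have e1 : sb * (nv ^+ 2 + 0 + 0 + nu ^+ 2) / ak = sb * nv ^+ 2 / ak + sb * (nu ^+ 2 / ak).
  by rewrite !addr0 mulrDr mulrDl mulrA.
rewrite e1.
have e2 : sb * (nu ^+ 2 / ak) <= nu ^+ 2 / ak by apply: ler_piMl.
move: lim e2 gv; set A1 := sb * nv ^+ 2 / ak; set A2 := sb * (nu ^+ 2 / ak); set A3 := nu ^+ 2 / ak.
set A4 := kappa_gf * nv; set A5 := kappa_dr * nv.
rewrite mulrDl -/A4 -/A5.
have -> : xk + (vk + uk) = xk + vk + uk by rewrite addrA.
lra.
Qed.
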